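(* Let $p\in(1,\infty]$ and let $\theta_p$ be a real number with $0<\theta_p\le 1/2$ and $3((1-\theta_p)^p+2\theta_p^p)^{1/p}+(3\theta_p^p)^{1/p}<3$ (for $p=\infty$ the latter is read as $3\max(1-\theta_\infty,\theta_\infty)+\theta_\infty<3$). Define, for $p<\infty$: $\alpha_X=3^{1/p}\theta_p$, $\alpha_P=1$, $\beta_{in}=((1-\theta_p)^p+2\theta_p^p)^{1/p}$, $\beta_{out}=(1+3\theta_p^p)^{1/p}$, $\gamma_0=6^{1/p}\theta_p$, $\gamma_1=4^{1/p}\theta_p$, $\gamma_2=2^{1/p}\theta_p$, $\tau=2^{1/p}$; and for $p=\infty$: $\alpha_X=\gamma_0=\gamma_1=\gamma_2=\theta_\infty$, $\alpha_P=\beta_{out}=\tau=1$, $\beta_{in}=1-\theta_\infty$. Then the tuple $(\alpha_X,\alpha_P,\beta_{in},\beta_{out},\gamma_0,\gamma_1,\gamma_2,\tau)$ is Steiner embeddable.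
   Context: These are the $\ell_p$-distances in the point configuration with terminals $\mathbf{0}$ and the standard basis vectors $\mathbf{e}_i$, and facilities $\theta_p(\mathbf{e}_i+\mathbf{e}_j+\mathbf{e}_k)$. A tuple $(\alpha_X,\alpha_P,\beta_{in},\beta_{out},\gamma_0,\gamma_1,\gamma_2,\tau)$ of positive reals is metric compatible if: $\alpha_X\le\min(\alpha_P+\beta_{in},\alpha_P+\beta_{out})$; $\alpha_P\le\min(\alpha_X+\beta_{in},\alpha_X+\beta_{out})$; $\beta_{in}\le\min(\alpha_X+\alpha_P,\beta_{out}+\tau,\gamma_i+\beta_{out}: i\in\{0,1,2\})$; $\beta_{out}\le\min(\alpha_X+\alpha_P,\beta_{in}+\tau,\gamma_i+\beta_{in}: i\in\{0,1,2\})$; $\gamma_i\le\min(2\alpha_X,\gamma_j+\gamma_k,2\beta_{in},2\beta_{out})$ for all $i,j,k\in\{0,1,2\}$; $\tau\le\min(2\alpha_P,2\beta_{in},2\beta_{out})$. It is Steiner embeddable if it is metric compatible and: (P1) $\alpha_X\le 3\gamma_2/2,\alpha_P,\beta_{in},\beta_{out},\gamma_0,\gamma_1,\tau$; (P2) $\alpha_P\le\beta_{out}$; (P3) $\beta_{in}+\alpha_X/3<\min(\alpha_P,\tau)$; (P4) $\min(\alpha_P,\tau)\le\beta_{in}+\gamma_2$. *)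

(* Defs.v *)
From Stdlib Require Import Reals.
Open Scope R_scope.

Inductive exponent : Type :=
| PFin (p : R)
| PInf.

Definition exponent_gt1 (p : exponent) : Prop :=
  match p with PFin q => 1 < q | PInf => True end.

Definition metric_compatible (aX aP bin bout g0 g1 g2 t : R) : Prop :=
  0 < aX /\ 0 < aP /\ 0 < bin /\ 0 < bout /\ 0 < g0 /\ 0 < g1 /\ 0 < g2 /\ 0 < t /\
  aX <= Rmin (aP + bin) (aP + bout) /\
  aP <= Rmin (aX + bin) (aX + bout) /\
  (bin <= aX + aP /\ bin <= bout + t /\
   bin <= g0 + bout /\ bin <= g1 + bout /\ bin <= g2 + bout) /\
  (bout <= aX + aP /\ bout <= bin + t /\
   bout <= g0 + bin /\ bout <= g1 + bin /\ bout <= g2 + bin) /\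
  (g0 <= 2 * aX /\ g0 <= g1 + g2 /\ g0 <= 2 * bin /\ g0 <= 2 * bout) /\
  (g1 <= 2 * aX /\ g1 <= g0 + g2 /\ g1 <= 2 * bin /\ g1 <= 2 * bout) /\
  (g2 <= 2 * aX /\ g2 <= g0 + g1 /\ g2 <= 2 * bin /\ g2 <= 2 * bout) /\
  t <= Rmin (2 * aP) (Rmin (2 * bin) (2 * bout)).

Definition steiner_embeddable (aX aP bin bout g0 g1 g2 t : R) : Prop :=
  metric_compatible aX aP bin bout g0 g1 g2 t /\
  (aX <= 3 * g2 / 2 /\ aX <= aP /\ aX <= bin /\ aX <= bout /\
   aX <= g0 /\ aX <= g1 /\ aX <= t) /\
  aP <= bout /\
  bin + aX / 3 < Rmin aP t /\
  Rmin aP t <= bin + g2.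

Definition theta_condition (p : exponent) (th : R) : Prop :=
  0 < th /\ th <= 1 / 2 /\
  match p with
  | PFin q =>
      3 * Rpower (Rpower (1 - th) q + 2 * Rpower th q) (1 / q)
        + Rpower (3 * Rpower th q) (1 / q) < 3
  | PInf => 3 * Rmax (1 - th) th + th < 3
  end.

Definition tuple_steiner_embeddable (p : exponent) (th : R) : Prop :=
  match p with
  | PFin q =>
      steiner_embeddable
        (Rpower 3 (1 / q) * th)
        1
        (Rpower (Rpower (1 - th) q + 2 * Rpower th q) (1 / q))
        (Rpower (1 + 3 * Rpower th q) (1 / q))
        (Rpower 6 (1 / q) * th)
        (Rpower 4 (1 / q) * th)
        (Rpower 2 (1 / q) * th)
        (Rpower 2 (1 / q))
  | PInf =>
      steiner_embeddable th 1 (1 - th) 1 th th th 1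
  end.

(* Main.v *)
Require Import Defs.
From Stdlib Require Import Reals Lra.
Open Scope R_scope.

Lemma exp_le' x y : x <= y -> exp x <= exp y.
Proof. intros [H|H]; [left; apply exp_increasing; exact H| subst; lra]. Qed.

Lemma Rp_pos x y : 0 < Rpower x y.
Proof. unfold Rpower; apply exp_pos. Qed.

Lemma Rp_inv1 x q : 0 < x -> q <> 0 -> Rpower (Rpower x q) (1/q) = x.
Proof. intros Hx Hq. rewrite Rpower_mult. replace (q * (1/q)) with 1 by (field; auto).
  apply Rpower_1; auto. Qed.

Lemma Rp_inv2 x q : 0 < x -> q <> 0 -> Rpower (Rpower x (1/q)) q = x.
Proof. intros Hx Hq. rewrite Rpower_mult. replace (1/q * q) with 1 by (field; auto).
  apply Rpower_1; auto. Qed.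

Lemma Rp_le x y c : 0 <= c -> 0 < x <= y -> Rpower x c <= Rpower y c.
Proof. intros; apply Rle_Rpower_l; auto. Qed.

Lemma Rp_div x y z : 0 < x -> 0 < y -> Rpower (x / y) z = Rpower x z / Rpower y z.
Proof. intros Hx Hy. unfold Rpower, Rdiv. rewrite ln_mult, ln_Rinv; auto.
  2: apply Rinv_0_lt_compat; auto.
  rewrite Rmult_plus_distr_l, exp_plus. replace (z * - ln y) with (- (z * ln y)) by ring.
  rewrite exp_Ropp. reflexivity. Qed.

Lemma bern q s : 1 < q -> 0 < s -> 1 + q * (s - 1) <= Rpower s q.
Proof.
  intros Hq Hs.
  set (f := fun x => Rpower x q - q * x).
  assert (D : forall c, 0 < c -> derivable_pt_lim f c (q * Rpower c (q - 1) - q * 1)).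
  { intros c Hc. unfold f. apply derivable_pt_lim_minus.
    - apply derivable_pt_lim_power; auto.
    - apply derivable_pt_lim_scal. apply derivable_pt_lim_id. }
  assert (E1 : Rpower 1 q = 1) by (unfold Rpower; rewrite ln_1, Rmult_0_r, exp_0; auto).
  destruct (Rtotal_order s 1) as [Hl|[He|Hg]].
  - destruct (MVT_cor2 f (fun c => q * Rpower c (q - 1) - q * 1) s 1 Hl) as [c [Hc1 Hc2]].
    { intros c Hc; apply D; lra. }
    unfold f in Hc1. rewrite E1 in Hc1.
    assert (Rpower c (q-1) <= 1).
    { assert (ln c < 0) by (rewrite <- ln_1; apply ln_increasing; lra).
      unfold Rpower. apply Rle_trans with (exp 0); [apply exp_le'; nra | rewrite exp_0; lra]. }
    assert (q * (Rpower c (q-1) - 1) * (1 - s) <= 0).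
    { assert (0<q) by lra. assert (q * (Rpower c (q-1) - 1) <= 0) by nra. nra. }
    nra.
  - subst. rewrite E1. lra.
  - destruct (MVT_cor2 f (fun c => q * Rpower c (q - 1) - q * 1) 1 s Hg) as [c [Hc1 Hc2]].
    { intros c Hc; apply D; lra. }
    unfold f in Hc1. rewrite E1 in Hc1.
    assert (1 <= Rpower c (q-1)).
    { assert (0 < ln c) by (rewrite <- ln_1; apply ln_increasing; lra).
      unfold Rpower. apply Rle_trans with (exp 0); [rewrite exp_0; lra | apply exp_le'; nra]. }
    assert (0 <= q * (Rpower c (q-1) - 1) * (s - 1)).
    { apply Rmult_le_pos; [|lra]. assert (0<q) by lra. nra. }
    nra.
Qed.

Lemma tangent q m x : 1 < q -> 0 < m -> 0 < x ->
  Rpower m q + q * Rpower m (q - 1) * (x - m) <= Rpower x q.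
Proof.
  intros Hq Hm Hx.
  set (k := Rpower m (q - 1)).
  assert (Hk : 0 < k) by apply Rp_pos.
  assert (Em : Rpower m q = k * m).
  { unfold k. replace q with ((q - 1) + 1) at 1 by ring. rewrite Rpower_plus, Rpower_1; auto. }
  assert (Ex : Rpower x q = Rpower m q * Rpower (x / m) q).
  { rewrite Rpower_mult_distr; auto. f_equal. field. lra.
    apply Rdiv_lt_0_compat; auto. }
  pose proof (bern q (x / m) Hq (Rdiv_lt_0_compat _ _ Hx Hm)) as B.
  rewrite Ex, Em.
  assert (k * m * (1 + q * (x / m - 1)) = k * m + q * k * (x - m)) by (field; lra).
  assert (0 < k * m) by nra.
  nra.
Qed.

Lemma convexP q l x y : 1 < q -> 0 < l < 1 -> 0 < x -> 0 < y ->
  Rpower (l * x + (1 - l) * y) q <= l * Rpower x q + (1 - l) * Rpower y q.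
Proof.
  intros Hq Hl Hx Hy.
  set (m := l * x + (1 - l) * y).
  assert (Hm : 0 < m) by (unfold m; nra).
  pose proof (tangent q m x Hq Hm Hx).
  pose proof (tangent q m y Hq Hm Hy).
  set (k := q * Rpower m (q - 1)) in *.
  assert (l * (x - m) + (1 - l) * (y - m) = 0) by (unfold m; ring).
  assert (l * (Rpower m q + k * (x - m)) + (1 - l) * (Rpower m q + k * (y - m)) = Rpower m q)
   by (replace (Rpower m q) with (Rpower m q * 1) by ring; 
       transitivity (Rpower m q + k * (l * (x - m) + (1 - l) * (y - m))); [ring| rewrite H1; ring]).
  nra.
Qed.

Lemma superP q x y : 1 < q -> 0 < x -> 0 < y -> Rpower x q + Rpower y q <= Rpower (x + y) q.
Proof.
  intros Hq Hx Hy.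
  assert (E : forall z, 0 < z -> Rpower z q = z * Rpower z (q - 1)).
  { intros z Hz. replace q with (1 + (q - 1)) at 1 by ring. rewrite Rpower_plus, Rpower_1; auto. }
  rewrite (E x), (E y), (E (x+y)); try lra.
  assert (Rpower x (q-1) <= Rpower (x+y) (q-1)) by (apply Rp_le; lra).
  assert (Rpower y (q-1) <= Rpower (x+y) (q-1)) by (apply Rp_le; lra).
  nra.
Qed.

Lemma minkowski q a b c d : 1 < q -> 0 < a -> 0 < b -> 0 < c -> 0 < d ->
  Rpower (Rpower (a + c) q + Rpower (b + d) q) (1/q)
  <= Rpower (Rpower a q + Rpower b q) (1/q) + Rpower (Rpower c q + Rpower d q) (1/q).
Proof.
  intros Hq Ha Hb Hc Hd.
  assert (Hq0 : q <> 0) by lra.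
  set (X := Rpower (Rpower a q + Rpower b q) (1/q)).
  set (Y := Rpower (Rpower c q + Rpower d q) (1/q)).
  assert (HX : 0 < X) by apply Rp_pos. assert (HY : 0 < Y) by apply Rp_pos.
  assert (PX : Rpower X q = Rpower a q + Rpower b q).
  { unfold X; apply Rp_inv2; auto. pose proof (Rp_pos a q); pose proof (Rp_pos b q); lra. }
  assert (PY : Rpower Y q = Rpower c q + Rpower d q).
  { unfold Y; apply Rp_inv2; auto. pose proof (Rp_pos c q); pose proof (Rp_pos d q); lra. }
  set (S := X + Y). assert (HS : 0 < S) by (unfold S; lra).
  set (l := X / S).
  assert (Hl : 0 < l < 1).
  { unfold l; split. apply Rdiv_lt_0_compat; auto. unfold S; apply (Rmult_lt_reg_r (X+Y)); [lra|]; unfold Rdiv; rewrite Rmult_assoc, Rinv_l; lra. }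
  assert (K : forall u v, 0 < u -> 0 < v ->
     Rpower (u + v) q <= Rpower S q * (l * (Rpower u q / Rpower X q) + (1 - l) * (Rpower v q / Rpower Y q))).
  { intros u v Hu Hv.
    replace (u + v) with (S * (l * (u / X) + (1 - l) * (v / Y))) by (unfold l, S; field; lra).
    rewrite <- Rpower_mult_distr; auto.
    2: { assert (0 < u / X) by (apply Rdiv_lt_0_compat; auto).
         assert (0 < v / Y) by (apply Rdiv_lt_0_compat; auto). nra. }
    apply Rmult_le_compat_l. left; apply Rp_pos.
    rewrite <- !Rp_div; auto.
    apply convexP; auto; apply Rdiv_lt_0_compat; auto. }
  pose proof (K a c Ha Hc) as K1. pose proof (K b d Hb Hd) as K2.
  assert (Rpower (a + c) q + Rpower (b + d) q <= Rpower S q).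
  { eapply Rle_trans. apply Rplus_le_compat; [exact K1|exact K2].
    assert (Rpower X q > 0) by apply Rp_pos. assert (Rpower Y q > 0) by apply Rp_pos.
    right. rewrite PX, PY in *. field. split; lra. }
  fold S. rewrite <- (Rp_inv1 S q); auto.
  apply Rp_le. left; apply Rdiv_lt_0_compat; lra.
  split; auto. pose proof (Rp_pos (a+c) q); pose proof (Rp_pos (b+d) q); lra.
Qed.

Lemma Rsub q x y : 1 < q -> 0 < x -> 0 < y ->
  Rpower (x + y) (1/q) <= Rpower x (1/q) + Rpower y (1/q).
Proof.
  intros Hq Hx Hy.
  pose proof (superP q (Rpower x (1/q)) (Rpower y (1/q)) Hq (Rp_pos _ _) (Rp_pos _ _)) as S.
  rewrite !Rp_inv2 in S by lra.
  rewrite <- (Rp_inv1 (Rpower x (1 / q) + Rpower y (1 / q)) q).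
  2: pose proof (Rp_pos x (1/q)); pose proof (Rp_pos y (1/q)); lra. 2: lra.
  apply Rp_le. left; apply Rdiv_lt_0_compat; lra. lra.
Qed.

Lemma Rge_small q x : 1 < q -> 0 < x <= 1 -> x <= Rpower x (1/q).
Proof.
  intros Hq Hx. unfold Rpower. rewrite <- (exp_ln x) at 1 by lra.
  apply exp_le'. assert (ln x <= 0).
  { destruct (Req_dec x 1). subst; rewrite ln_1; lra.
    left; rewrite <- ln_1; apply ln_increasing; lra. }
  assert (0 < 1/q < 1). { split. apply Rdiv_lt_0_compat; lra.
    apply (Rmult_lt_reg_r q); [lra|]. unfold Rdiv; rewrite Rmult_assoc, Rinv_l; lra. }
  nra.
Qed.

Lemma Rle_big q x : 1 < q -> 1 <= x -> Rpower x (1/q) <= x.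
Proof.
  intros Hq Hx. unfold Rpower. rewrite <- (exp_ln x) at 2 by lra.
  apply exp_le'. assert (0 <= ln x).
  { destruct (Req_dec x 1). subst; rewrite ln_1; lra.
    left; rewrite <- ln_1; apply ln_increasing; lra. }
  assert (0 < 1/q < 1). { split. apply Rdiv_lt_0_compat; lra.
    apply (Rmult_lt_reg_r q); [lra|]. unfold Rdiv; rewrite Rmult_assoc, Rinv_l; lra. }
  nra.
Qed.

Lemma Rp_one y : Rpower 1 y = 1.
Proof. unfold Rpower; rewrite ln_1, Rmult_0_r, exp_0; auto. Qed.

Theorem proposition5p2 (p : exponent) (th : R) :
  exponent_gt1 p -> theta_condition p th -> tuple_steiner_embeddable p th.
Proof.
  destruct p as [q|]; simpl; intros Hp [H0 [H1 H]].
  2: { unfold steiner_embeddable, metric_compatible.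
       unfold Rmin; repeat split; repeat destruct Rle_dec; lra. }
  set (r := 1/q).
  assert (Hq0 : q <> 0) by lra.
  assert (Hr : 0 <= r) by (left; unfold r; apply Rdiv_lt_0_compat; lra).
  set (a := Rpower th q). set (u := Rpower (1 - th) q).
  assert (Ha : 0 < a) by apply Rp_pos. assert (Hu : 0 < u) by apply Rp_pos.
  assert (Eth : Rpower a r = th) by (apply Rp_inv1; auto).
  assert (Eu : Rpower u r = 1 - th) by (apply Rp_inv1; auto; lra).
  assert (Ek : forall k, 0 < k -> Rpower k r * th = Rpower (k * a) r).
  { intros k Hk. rewrite <- Rpower_mult_distr; auto. rewrite Eth; auto. }
  fold r in H |- *. fold a u in H |- *.
  rewrite !Ek by lra.
  assert (Mono : forall x y, 0 < x <= y -> Rpower x r <= Rpower y r) by (intros; apply Rp_le; auto).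
  assert (Sub : forall x y, 0 < x -> 0 < y -> Rpower (x + y) r <= Rpower x r + Rpower y r)
    by (intros; apply Rsub; auto).
  assert (R1 : Rpower 1 r = 1) by apply Rp_one.
  assert (Hau : a <= u) by (apply Rp_le; lra).
  set (X := Rpower (3 * a) r) in *.
  set (B := Rpower (u + 2 * a) r) in *.
  set (O := Rpower (1 + 3 * a) r) in *.
  set (G0 := Rpower (6 * a) r) in *.
  set (G1 := Rpower (4 * a) r) in *.
  set (G2 := Rpower (2 * a) r) in *.
  set (T := Rpower 2 r) in *.
  assert (PX : 0 < X) by apply Rp_pos. assert (PB : 0 < B) by apply Rp_pos.
  assert (PO : 0 < O) by apply Rp_pos. assert (PG0 : 0 < G0) by apply Rp_pos.
  assert (PG1 : 0 < G1) by apply Rp_pos. assert (PG2 : 0 < G2) by apply Rp_pos.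
  assert (PT : 0 < T) by apply Rp_pos.
  assert (a3 : 3 * a <= 1).
  { destruct (Rle_lt_dec (3 * a) 1) as [h|h]; auto. exfalso.
    assert (1 <= X) by (rewrite <- R1; apply Mono; lra).
    assert (G2 <= B) by (apply Mono; lra).
    destruct (Rle_lt_dec (2 * a) 1).
    - assert (2 * a <= G2) by (apply Rge_small; auto; lra). lra.
    - assert (1 <= G2) by (rewrite <- R1; apply Mono; lra). lra. }
  assert (f1 : X <= 1) by (rewrite <- R1; apply Mono; lra).
  assert (f2 : th <= X) by (rewrite <- Eth; apply Mono; lra).
  assert (f3 : 1 - th <= B) by (rewrite <- Eu; apply Mono; lra).
  assert (f4 : X <= B) by (apply Mono; lra).
  assert (f5 : 1 <= O) by (rewrite <- R1; apply Mono; lra).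
  assert (f5' : X <= O) by (apply Mono; lra).
  assert (f6 : X <= G1) by (apply Mono; lra).
  assert (f6' : G1 <= G0) by (apply Mono; lra).
  assert (f6'' : G2 <= X) by (apply Mono; lra).
  assert (f6''' : th <= G2) by (rewrite <- Eth; apply Mono; lra).
  assert (f7 : X <= 3 * G2 / 2).
  { unfold X, G2. replace (3 * a) with (3/2 * (2 * a)) by field.
    rewrite <- Rpower_mult_distr by lra.
    assert (Rpower (3/2) r <= 3/2) by (apply Rle_big; lra). pose proof (Rp_pos (2 * a) r). nra. }
  assert (f8 : 1 <= T) by (rewrite <- R1; apply Mono; lra).
  assert (f8' : T <= 2).
  { pose proof (Sub 1 1 ltac:(lra) ltac:(lra)) as S. rewrite R1 in S.
    replace (1 + 1) with 2 in S by ring. exact S. }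
  assert (f10 : O <= X + 1).
  { pose proof (Sub 1 (3 * a) ltac:(lra) ltac:(lra)) as S. rewrite R1 in S. fold O X in S. lra. }
  assert (f11 : O <= T) by (apply Mono; lra).
  assert (f13 : G0 <= 2 * X) by (unfold G0; replace (6 * a) with (3 * a + 3 * a) by ring;
     replace (2 * X) with (X + X) by ring; apply Sub; lra).
  assert (f14 : G0 <= G1 + G2) by (unfold G0; replace (6 * a) with (4 * a + 2 * a) by ring;
     apply Sub; lra).
  assert (Pinv : forall x, 0 < x -> Rpower (Rpower x r) q = x) by (intros; apply Rp_inv2; auto).
  assert (f12 : O <= B + G2).
  { pose proof (minkowski q (1 - th) G2 th th Hp ltac:(lra) PG2 H0 H0) as M.
    fold r a u in M. unfold G2 in M at 2. rewrite Pinv in M by lra.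
    replace (a + a) with (2 * a) in M by ring. fold B G2 in M.
    eapply Rle_trans; [|exact M].
    apply Mono. split. lra. replace (1 - th + th) with 1 by ring. rewrite Rp_one.
    pose proof (superP q G2 th Hp PG2 H0) as S. unfold G2 in S at 1. rewrite Pinv in S by lra.
    fold a in S. lra. }
  assert (f15 : T <= 2 * B).
  { pose proof (minkowski q (1 - th) th th (1 - th) Hp ltac:(lra) H0 H0 ltac:(lra)) as M.
    fold r a u in M. replace (1 - th + th) with 1 in M by ring.
    replace (th + (1 - th)) with 1 in M by ring. rewrite Rp_one in M.
    replace (1 + 1) with 2 in M by ring. fold T in M.
    assert (Rpower (u + a) r <= B) by (apply Mono; lra).
    replace (a + u) with (u + a) in M by ring. lra. }
  unfold steiner_embeddable, metric_compatible.
  unfold Rmin; repeat split; repeat destruct Rle_dec; lra.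
Qed.
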